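(* Let $E_0,E_1,E_2\in\mathcal G$ be mutually distant, and let $W\in\mathcal G$ be adjacent to $E_0$ and not distant from $E_1$ nor from $E_2$. For $i\in\{1,2\}$ let $p_i:=E_i\cap W$, which is a point. Then the line $L=p_1+p_2$ meets $E_0$; that is, $L$ is the unique line through $p_1$ meeting $E_0$ and $E_2$.
   Context: $K$ is a (not necessarily commutative) field and $V$ is a left vector space over $K$ of arbitrary (possibly infinite) dimension with $\dim V>2$. $\mathcal G:=\{X\le V\mid X\cong V/X\}$, assumed nonempty. Points are $1$-dimensional and lines $2$-dimensional subspaces; two subspaces meet if they have a common point. $X,Y\in\mathcal G$ are adjacent if $\dim((X+Y)/X)=\dim((X+Y)/Y)=1$, and distant if $V=X\oplus Y$. *)

(* Defs.v *)
From HB Require Import structures.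
From mathcomp Require Import all_boot all_algebra.
Set Implicit Arguments. Unset Strict Implicit. Unset Printing Implicit Defensive.
Import GRing.Theory.
Local Open Scope ring_scope.

Definition divring (K : unitRingType) : Prop :=
  forall x : K, x != 0 -> x \is a GRing.unit.

Section Geom.
Variables (K : unitRingType) (V : lmodType K).

Definition subspace (X : V -> Prop) : Prop :=
  X 0 /\ forall (a : K) (u v : V), X u -> X v -> X (a *: u + v).

Definition incl (X Y : V -> Prop) : Prop := forall v, X v -> Y v.
Definition seteq (X Y : V -> Prop) : Prop := forall v, X v <-> Y v.
Definition cap (X Y : V -> Prop) : V -> Prop := fun v => X v /\ Y v.
Definition ssum (X Y : V -> Prop) : V -> Prop :=
  fun v => exists x y, X x /\ Y y /\ v = x + y.

Definition lin (f : V -> V) : Prop :=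
  forall (a : K) (u v : V), f (a *: u + v) = a *: f u + f v.

(* X ≅ V/X : a linear isomorphism V/X -> X is the same as a linear
   surjection V -> X whose kernel is exactly X (first isomorphism theorem). *)
Definition iso_quot (X : V -> Prop) : Prop :=
  exists f : V -> V, lin f /\
    (forall v, X (f v)) /\ (forall x, X x -> exists v, f v = x) /\
    (forall v, f v = 0 <-> X v).

Definition inG (X : V -> Prop) : Prop := subspace X /\ iso_quot X.

Definition dim_gt2 : Prop :=
  exists u v w : V, forall a b c : K,
    a *: u + b *: v + c *: w = 0 -> [/\ a = 0, b = 0 & c = 0].

Definition is_point (P : V -> Prop) : Prop :=
  exists v : V, v != 0 /\ forall u, P u <-> exists a : K, u = a *: v.

Definition is_line (L : V -> Prop) : Prop :=
  exists v w : V, (forall a b : K, a *: v + b *: w = 0 -> a = 0 /\ b = 0) /\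
    forall u, L u <-> exists a b : K, u = a *: v + b *: w.

Definition meets (X Y : V -> Prop) : Prop :=
  exists P, is_point P /\ incl P X /\ incl P Y.

Definition quot_dim1 (Z X : V -> Prop) : Prop :=
  exists v, Z v /\ ~ X v /\
    forall z, Z z -> exists x (a : K), X x /\ z = x + a *: v.

Definition adjacent (X Y : V -> Prop) : Prop :=
  quot_dim1 (ssum X Y) X /\ quot_dim1 (ssum X Y) Y.

Definition distant (X Y : V -> Prop) : Prop :=
  (forall v, ssum X Y v) /\ (forall v, X v -> Y v -> v = 0).

End Geom.

(* Main.v *)
Require Import Defs.
From mathcomp Require Import all_boot all_algebra.
From Stdlib Require Import Classical.
Set Implicit Arguments. Unset Strict Implicit. Unset Printing Implicit Defensive.
Import GRing.Theory.
Local Open Scope ring_scope.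

Section Aux.
Variables (K : unitRingType) (V : lmodType K).
Hypothesis HK : divring K.

Lemma unitV (a : K) : a != 0 -> a^-1 * a = 1.
Proof. by move=> a0; apply: mulVr; apply: HK. Qed.

Lemma divK (a b : K) : a != 0 -> b * a^-1 * a = b.
Proof. by move=> a0; rewrite -mulrA unitV // mulr1. Qed.

Lemma scale_inj (a : K) (v : V) : a != 0 -> a *: v = 0 -> v = 0.
Proof. by move=> a0 H; rewrite -[v]scale1r -(unitV a0) -scalerA H scaler0. Qed.

Lemma one_neq0 : (1 : K) != 0.
Proof. exact: oner_neq0. Qed.

Lemma m1_neq0 : (-1 : K) != 0.
Proof. by rewrite oppr_eq0 one_neq0. Qed.

Section Sub.
Variable X : V -> Prop.
Hypothesis HX : subspace X.
Lemma sub0 : X 0. Proof. exact: HX.1. Qed.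
Lemma subZ a u : X u -> X (a *: u).
Proof. by move=> Hu; have := HX.2 a u 0 Hu HX.1; rewrite addr0. Qed.
Lemma subD u v : X u -> X v -> X (u + v).
Proof. by move=> Hu Hv; have := HX.2 1 u v Hu Hv; rewrite scale1r. Qed.
Lemma subN u : X u -> X (- u).
Proof. by move=> Hu; rewrite -scaleN1r; apply: subZ. Qed.
Lemma subB u v : X u -> X v -> X (u - v).
Proof. by move=> Hu Hv; apply: subD => //; apply: subN. Qed.
Lemma solve a m y : a != 0 -> X (a *: m + y) -> X y -> X m.
Proof.
move=> a0 H1 H2; have := subZ (a^-1) (subB H1 H2).
by rewrite addrK scalerA unitV // scale1r.
Qed.
End Sub.

Lemma sub_iff (X Y : V -> Prop) : subspace X -> (forall u, Y u <-> X u) -> subspace Y.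
Proof.
move=> [H0 H1] E; split; first by apply/E.
by move=> a u v /E Hu /E Hv; apply/E; apply: H1.
Qed.

Definition span2 (c d : V) : V -> Prop := fun u => exists x y : K, u = x *: c + y *: d.
Definition indep2 (c d : V) := forall x y : K, x *: c + y *: d = 0 -> x = 0 /\ y = 0.

Lemma span2_sub c d : subspace (span2 c d).
Proof.
split; first by exists 0, 0; rewrite !scale0r addr0.
move=> a u v [x [y ->]] [x' [y' ->]]; exists (a * x + x'), (a * y + y').
by rewrite scalerDr !scalerA !scalerDl addrACA.
Qed.

Lemma span2_l c d : span2 c d c.
Proof. by exists 1, 0; rewrite scale1r scale0r addr0. Qed.
Lemma span2_r c d : span2 c d d.
Proof. by exists 0, 1; rewrite scale1r scale0r add0r. Qed.

Lemma ssum_sub (X Y : V -> Prop) : subspace X -> subspace Y -> subspace (ssum X Y).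
Proof.
move=> sX sY; split; first by exists 0, 0; rewrite addr0; split; [exact: sub0|split; [exact: sub0|]].
move=> a u v [x [y [Hx [Hy ->]]]] [x' [y' [Hx' [Hy' ->]]]].
exists (a *: x + x'), (a *: y + y'); split; first exact: sX.2.
split; first exact: sY.2.
by rewrite scalerDr addrACA.
Qed.

Lemma lemB m1 m2 c d a b c' d' : indep2 c d ->
  c = a *: m1 + b *: m2 -> d = c' *: m1 + d' *: m2 -> a != 0 ->
  span2 c d m1 /\ span2 c d m2.
Proof.
move=> ind Hc Hd a0.
pose k := c' * a^-1.
have E : d - k *: c = (d' - k * b) *: m2.
  by rewrite Hc Hd scalerDr !scalerA /k divK // scalerBl opprD addrACA subrr add0r.
have S := span2_sub c d.
case: (eqVneq (d' - k * b) 0) => [d0|dn0].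
  exfalso; move: E; rewrite d0 scale0r => E.
  have : k *: c + (-1) *: d = 0 by rewrite scaleN1r -opprB E oppr0.
  by move/ind => [_ /eqP]; rewrite (negbTE m1_neq0).
have H2 : span2 c d m2.
  apply: (solve S dn0 (y := 0)); last exact: sub0.
  by rewrite addr0 -E; apply: subB S _ _ (span2_r _ _) (subZ S _ (span2_l _ _)).
split=> //; apply: (solve S a0 (y := b *: m2)); first by rewrite -Hc; exact: span2_l.
exact: subZ.
Qed.

Lemma lemA m1 m2 c d : indep2 c d -> span2 m1 m2 c -> span2 m1 m2 d ->
  span2 c d m1 /\ span2 c d m2.
Proof.
move=> ind [a [b Hc]] [c' [d' Hd]].
case: (eqVneq a 0) => [a0|an0]; last exact: lemB ind Hc Hd an0.
case: (eqVneq c' 0) => [c0|cn0]; last first.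
  have ind' : indep2 d c by move=> x y; rewrite addrC => /ind [-> ->].
  have [[x [y E1]] [x' [y' E2]]] := lemB ind' Hd Hc cn0.
  by split; [exists y, x; rewrite addrC | exists y', x'; rewrite addrC].
exfalso.
move: Hc Hd; rewrite a0 c0 !scale0r !add0r => Hc Hd.
case: (eqVneq b 0) => [b0|bn0].
  have : 1 *: c + 0 *: d = 0 by rewrite Hc b0 !scale0r scaler0 addr0.
  by move/ind => [/eqP]; rewrite (negbTE one_neq0).
have : (d' * b^-1) *: c + (-1) *: d = 0.
  by rewrite Hc scalerA divK // scaleN1r Hd subrr.
by move/ind => [_ /eqP]; rewrite (negbTE m1_neq0).
Qed.

Lemma lemG (x x1 v0 : V) (a a1 : K) : a1 != 0 ->
  (x + a *: v0) - (a * a1^-1) *: (x1 + a1 *: v0) = x - (a * a1^-1) *: x1.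
Proof. by move=> a0; rewrite scalerDr scalerA divK // opprD addrACA subrr addr0. Qed.

Lemma point_lem (W E0 E1 : V -> Prop) : subspace W -> subspace E0 -> subspace E1 ->
  distant E0 E1 -> adjacent W E0 -> ~ distant W E1 -> is_point (cap E1 W).
Proof.
move=> sW s0 s1 [d01 i01] [[u [Su [nu Hu]]] [v0 [Sv0 [nv0 Hv0]]]] nd.
have [v1 [[e1 w1] nz]] : exists v1, (E1 v1 /\ W v1) /\ v1 != 0.
  apply: NNPP => H.
  have H0 : forall f, W f -> E1 f -> f = 0.
    move=> f Wf Ef; case: (eqVneq f 0) => // fn; exfalso; apply: H.
    by exists f.
  apply: nd; split=> //.
  have S := ssum_sub sW s1.
  case: Sv0 => w0 [e0' [Hw0 [He0' Ev0]]].
  have nw0 : ~ E0 w0 by move=> H'; apply: nv0; rewrite Ev0; exact: subD.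
  case: Su => w' [e' [Hw' [He' Eu]]].
  have F : forall e, E0 e -> exists w (c : K), W w /\ e = w + c *: e'.
    move=> e He; have [|x [b [Hx Ee]]] := Hu e.
      by exists 0, e; rewrite add0r; split; [exact: sub0|].
    exists (x + b *: w'), b; split; first by apply: subD => //; exact: subZ.
    by rewrite Ee Eu scalerDr addrA.
  have [f0 [f1 [Hf0 [Hf1 Ew0]]]] := d01 w0.
  have [w [b [Hw Ef0]]] := F f0 Hf0.
  have bn0 : b != 0.
    apply/negP => /eqP b0; move: Ef0; rewrite b0 scale0r addr0 => Ef0.
    have : f1 = 0.
      apply: H0 => //; have -> : f1 = w0 - f0 by rewrite Ew0 (addrC f0) addrK.
      by apply: subB => //; rewrite Ef0.
    by move=> f10; apply: nw0; rewrite Ew0 f10 addr0.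
  have SW : forall x, W x -> ssum W E1 x.
    by move=> x Hx; exists x, 0; split=> //; split; [exact: sub0|rewrite addr0].
  have SE : forall x, E1 x -> ssum W E1 x.
    by move=> x Hx; exists 0, x; split; [exact: sub0|split=> //; rewrite add0r].
  have Se' : ssum W E1 e'.
    apply: (solve S bn0 (y := w)); last exact: SW.
    rewrite addrC -Ef0; have -> : f0 = w0 - f1 by rewrite Ew0 addrK.
    by apply: subB S _ _ (SW _ Hw0) (SE _ Hf1).
  move=> v; have [g0 [g1 [Hg0 [Hg1 ->]]]] := d01 v.
  have [w'' [c [Hw'' ->]]] := F g0 Hg0.
  apply: (subD S) ; last exact: SE.
  apply: (subD S); first exact: SW.
  exact: subZ.
exists v1; split=> // x; split.
  move=> [Ex Wx].
  have [|y [a [Hy Exy]]] := Hv0 x.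
    by exists x, 0; split=> //; split; [exact: sub0|rewrite addr0].
  have [|y1 [a1 [Hy1 Ev1]]] := Hv0 v1.
    by exists v1, 0; split=> //; split; [exact: sub0|rewrite addr0].
  have a1n : a1 != 0.
    apply/negP => /eqP a10; move/eqP: nz; apply; apply: i01 => //.
    by rewrite Ev1 a10 scale0r addr0.
  exists (a * a1^-1); apply: subr0_eq; apply: i01.
    by rewrite {1}Exy {1}Ev1 lemG //; apply: subB => //; exact: subZ.
  by apply: subB => //; exact: subZ.
by move=> [a ->]; split; exact: subZ.
Qed.

End Aux.

Theorem lemma4p9 (K : unitRingType) (HK : divring K) (V : lmodType K)
  (Hdim : dim_gt2 V) (E0 E1 E2 W : V -> Prop) :
  inG E0 -> inG E1 -> inG E2 -> inG W ->
  distant E0 E1 -> distant E0 E2 -> distant E1 E2 ->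
  adjacent W E0 -> ~ distant W E1 -> ~ distant W E2 ->
  is_point (cap E1 W) /\ is_point (cap E2 W) /\
  is_line (ssum (cap E1 W) (cap E2 W)) /\
  meets (ssum (cap E1 W) (cap E2 W)) E0 /\
  (forall M : V -> Prop, is_line M -> incl (cap E1 W) M ->
     meets M E0 -> meets M E2 -> seteq M (ssum (cap E1 W) (cap E2 W))).
Proof.
move=> [s0 _] [s1 _] [s2 _] [sW _] d01 d02 d12 adj nd1 nd2.
have P1 := point_lem HK sW s0 s1 d01 adj nd1.
have P2 := point_lem HK sW s0 s2 d02 adj nd2.
split=> //; split=> //.
case: (P1) => v1 [nz1 H1]; case: (P2) => v2 [nz2 H2].
have HL : forall u, ssum (cap E1 W) (cap E2 W) u <-> span2 v1 v2 u.
  move=> u; split.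
    move=> [x [y [/H1 [a ->] [/H2 [b ->] ->]]]]; by exists a, b.
  move=> [a [b ->]]; exists (a *: v1), (b *: v2); split; first by apply/H1; exists a.
  by split=> //; apply/H2; exists b.
have [e1v1 wv1] : cap E1 W v1 by apply/H1; exists 1; rewrite scale1r.
have [e2v2 wv2] : cap E2 W v2 by apply/H2; exists 1; rewrite scale1r.
have ind12 : indep2 v1 v2.
  move=> x y E.
  have xv : x *: v1 = 0.
    apply: d12.2; first exact: subZ.
    have -> : x *: v1 = - (y *: v2) by apply/eqP; rewrite -addr_eq0 E.
    by apply: subN => //; exact: subZ.
  have x0 : x = 0.
    by case: (eqVneq x 0) => // xn; exfalso; move: nz1; rewrite (scale_inj HK xn xv) eqxx.
  move: E; rewrite x0 scale0r add0r => yv; split=> //.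
  by case: (eqVneq y 0) => // yn; exfalso; move: nz2; rewrite (scale_inj HK yn yv) eqxx.
split; first by exists v1, v2; split.
case: adj => _ [v0 [_ [nv0 Hv0]]].
have [k [z [Ez [nz ev2]]]] : exists (k : K) z, E0 z /\ z != 0 /\ v2 = z + k *: v1.
  have [|y1 [a1 [Hy1 Ev1]]] := Hv0 v1.
    by exists v1, 0; split=> //; split; [exact: sub0|rewrite addr0].
  have [|y2 [a2 [Hy2 Ev2]]] := Hv0 v2.
    by exists v2, 0; split=> //; split; [exact: sub0|rewrite addr0].
  have a1n : a1 != 0.
    apply/negP => /eqP a10; move/eqP: nz1; apply; apply: d01.2 => //.
    by rewrite Ev1 a10 scale0r addr0.
  exists (a2 * a1^-1), (v2 - (a2 * a1^-1) *: v1); split; last split; last by rewrite subrK.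
    by rewrite {1}Ev1 {1}Ev2 lemG //; apply: subB => //; exact: subZ.
  apply/negP => /eqP E.
  have : (- (a2 * a1^-1)) *: v1 + 1 *: v2 = 0 by rewrite scale1r scaleNr addrC.
  by move/ind12 => [_ /eqP]; rewrite (negbTE (one_neq0 K)).
have SL := span2_sub v1 v2.
split.
  exists (fun u => exists a : K, u = a *: z); split; first by exists z.
  split.
    move=> u [a ->]; apply/HL.
    apply: (subZ SL); have -> : z = v2 - k *: v1 by rewrite ev2 addrK.
    by apply: subB SL _ _ (span2_r _ _) (subZ SL _ (span2_l _ _)).
  by move=> u [a ->]; exact: subZ.
move=> M [m1 [m2 [_ HM]]] inc [P0 [[c0 [nc0 HP0]] [P0M P0E]]]
  [P2' [[c2 [nc2 HP2]] [P2M P2E]]].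
have c0P : P0 c0 by apply/HP0; exists 1; rewrite scale1r.
have c2P : P2' c2 by apply/HP2; exists 1; rewrite scale1r.
have Mc0 := P0M _ c0P. have E0c0 := P0E _ c0P.
have Mc2 := P2M _ c2P. have E2c2 := P2E _ c2P.
have Mv1 : M v1 by apply: inc.
have ind02 : indep2 c0 c2.
  move=> x y E.
  have xv : x *: c0 = 0.
    apply: d02.2; first exact: subZ.
    have -> : x *: c0 = - (y *: c2) by apply/eqP; rewrite -addr_eq0 E.
    by apply: subN => //; exact: subZ.
  have x0 : x = 0.
    by case: (eqVneq x 0) => // xn; exfalso; move: nc0; rewrite (scale_inj HK xn xv) eqxx.
  move: E; rewrite x0 scale0r add0r => yv; split=> //.
  by case: (eqVneq y 0) => // yn; exfalso; move: nc2; rewrite (scale_inj HK yn yv) eqxx.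
have SC := span2_sub c0 c2.
have sM : subspace M := sub_iff (span2_sub m1 m2) HM.
have MS : forall u, M u -> span2 c0 c2 u.
  have [Hm1 Hm2] := lemA HK ind02 (proj1 (HM c0) Mc0) (proj1 (HM c2) Mc2).
  move=> u /HM [a [b ->]]; apply: subD SC _ _ (subZ SC _ Hm1) (subZ SC _ Hm2).
have [x [y Ev1]] := MS _ Mv1.
have wz : (k * x) *: c0 + z = 0.
  apply: d02.2; first by apply: subD => //; exact: subZ.
  have -> : (k * x) *: c0 + z = v2 - (k * y) *: c2.
    by rewrite ev2 Ev1 scalerDr !scalerA addrC addrA addrK.
  by apply: subB => //; exact: subZ.
have Ev2 : v2 = (k * y) *: c2.
  by rewrite ev2 Ev1 scalerDr !scalerA addrA (addrC z) wz add0r.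
have kyn : k * y != 0.
  by apply/negP => /eqP E; move: nz2; rewrite Ev2 E scale0r eqxx.
have xn : x != 0.
  apply/negP => /eqP x0; move/eqP: nz1; apply; apply: d12.2 => //.
  by rewrite Ev1 x0 scale0r add0r; exact: subZ.
move=> u; split.
  move=> /MS [x' [y' ->]]; apply/HL.
  have Lc2 : span2 v1 v2 c2.
    by apply: (solve HK SL kyn (y := 0)); [rewrite addr0 -Ev2; exact: span2_r|exact: sub0].
  have Lc0 : span2 v1 v2 c0.
    apply: (solve HK SL xn (y := y *: c2)); [rewrite -Ev1; exact: span2_l|exact: subZ].
  exact: subD SL _ _ (subZ SL _ Lc0) (subZ SL _ Lc2).
move=> /HL [a [b ->]]; apply: (subD sM); apply: (subZ sM) => //.
by rewrite Ev2; exact: (subZ sM _ Mc2).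
Qed.
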